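(* Let $R=\bigoplus_{s\in S}R_s$ be an $S$-graded ring inducing $S$ with $S$ cancellative. If $R$ is graded von Neumann regular, then the ring $R_e$ is von Neumann regular for every idempotent $e\in S$.
   Context: Rings are associative, not necessarily unital. $S$-graded ring inducing $S$: $S$ a partial groupoid, $R=\bigoplus_{s\in S}R_s$ with additive subgroups $R_s$, $R_sR_t\subseteq R_{st}$ when $st$ is defined, and $R_sR_t\neq0$ implies $st$ is defined. Convention: $0\in S$, $R_0=0$, $S\setminus\{0\}=\{s:R_s\ne0\}$, undefined products in $S$ set to $0$, $0$ absorbing. Homogeneous elements: $H_R=\bigcup_s R_s$. $S$ is cancellative if $0\ne su=tu$ or $0\ne us=ut$ implies $s=t$. $R$ is graded von Neumann regular if $x\in xRx$ for all $x\in H_R$. For an idempotent $e$ of $S$, $R_e$ is a subring. *)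

(* Defs.v *)
From mathcomp Require Import all_boot all_algebra.
Set Implicit Arguments. Unset Strict Implicit. Unset Printing Implicit Defensive.
Import GRing.Theory.
Local Open Scope ring_scope.

(* An associative, not necessarily unital ring: an additive abelian group
   (zmodType) with an associative, biadditive multiplication [mul].
   (We do NOT use MathComp's ring structures, which are unital.) *)
Definition nonunital_ring (R : zmodType) (mul : R -> R -> R) : Prop :=
  [/\ (forall x y z, mul x (mul y z) = mul (mul x y) z),
      (forall x y z, mul x (y + z) = mul x y + mul x z)
    & (forall x y z, mul (x + y) z = mul x z + mul y z)].

(* A partial groupoid S: a set with a partial binary operation
   [op : S -> S -> option S]; [None] means "undefined", i.e. the adjoined
   absorbing element 0 of the paper's convention. *)

Definition additive_subgroup (R : zmodType) (A : R -> Prop) : Prop :=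
  A 0 /\ (forall x y, A x -> A y -> A (x - y)).

(* R = (+)_{s in S} R_s as abelian groups: every element is a finite sum of
   homogeneous elements of pairwise distinct degrees, and such a
   decomposition of 0 is trivial. *)
Definition direct_sum_decomposition (R : zmodType) (S : Type)
    (Rs : S -> R -> Prop) : Prop :=
  (forall s, additive_subgroup (Rs s)) /\
  (forall x : R, exists (n : nat) (g : 'I_n -> S) (f : 'I_n -> R),
      injective g /\ (forall i, Rs (g i) (f i)) /\ x = \sum_(i < n) f i) /\
  (forall (n : nat) (g : 'I_n -> S) (f : 'I_n -> R),
      injective g -> (forall i, Rs (g i) (f i)) ->
      \sum_(i < n) f i = 0 -> forall i, f i = 0).

Definition graded_ring_inducing (R : zmodType) (mul : R -> R -> R)
    (S : Type) (op : S -> S -> option S) (Rs : S -> R -> Prop) : Prop :=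
  [/\ nonunital_ring mul,
      direct_sum_decomposition Rs,
      (forall s t u x y, op s t = Some u -> Rs s x -> Rs t y -> Rs u (mul x y)),
      (forall s t x y, Rs s x -> Rs t y -> mul x y <> 0 -> op s t <> None)
    & (* S \ {0} = { s | R_s <> 0 } : every (nonzero) s in S has R_s <> 0 *)
      (forall s, exists x, Rs s x /\ x <> 0)].

Definition cancellative (S : Type) (op : S -> S -> option S) : Prop :=
  (forall s t u w, op s u = Some w -> op t u = Some w -> s = t) /\
  (forall s t u w, op u s = Some w -> op u t = Some w -> s = t).

Definition graded_vnr (R : zmodType) (mul : R -> R -> R)
    (S : Type) (Rs : S -> R -> Prop) : Prop :=
  forall s x, Rs s x -> exists y : R, x = mul (mul x y) x.

Definition vnr_subring (R : zmodType) (mul : R -> R -> R) (A : R -> Prop) : Prop :=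
  forall x, A x -> exists y, A y /\ x = mul (mul x y) x.

(* Main.v *)
Require Import Defs.
From HB Require Import structures.
From mathcomp Require Import all_boot all_algebra.
From Stdlib Require Import ClassicalEpsilon.
Set Implicit Arguments. Unset Strict Implicit. Unset Printing Implicit Defensive.
Import GRing.Theory.
Local Open Scope ring_scope.

Definition ceq {T : Type} (a b : T) : bool :=
  if excluded_middle_informative (a = b) then true else false.
Lemma ceqP (T : Type) : Equality.axiom (@ceq T).
Proof. move=> a b; rewrite /ceq; case: excluded_middle_informative => h; by constructor. Qed.
Definition CT (T : Type) := T.
HB.instance Definition _ (T : Type) := hasDecEq.Build (CT T) (@ceqP T).

Lemma sum_pred1_seq (V : zmodType) (T : eqType) (ds : seq T) (x : T) (F : T -> V) :
  uniq ds -> x \in ds -> \sum_(s <- ds | x == s) F s = F x.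
Proof.
move=> u; elim: ds u => // a ds IH /= /andP[na u]; rewrite inE big_cons.
case: eqP => [xa _|ne /= xin]; last by rewrite IH.
subst x.
rewrite big_hasC ?addr0 //; apply/hasPn => s sin /=; apply/eqP => e.
by move: na; rewrite e sin.
Qed.

Lemma subgroup_sum (V : zmodType) (A : V -> Prop) (I : Type) (r : seq I) (P : pred I) (F : I -> V) :
  additive_subgroup A -> (forall i, P i -> A (F i)) -> A (\sum_(i <- r | P i) F i).
Proof.
move=> [A0 AB] HF; apply: (big_ind A) => //.
  move=> x y ax ay; have := AB x (0 - y) ax (AB _ _ A0 ay).
  by rewrite sub0r opprK.
Qed.

Lemma homog_comp (R : zmodType) (S : Type) (Rs : S -> R -> Prop) (e : CT S) n
  (d : 'I_n -> CT S) (h : 'I_n -> R) (c : R) :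
  direct_sum_decomposition Rs -> Rs e c -> (forall i, Rs (d i) (h i)) ->
  \sum_i h i = c -> \sum_(i | d i == e) h i = c.
Proof.
move=> [sub [_ uniq0]] ce dh hc.
pose ds := undup (e :: [seq d i | i <- enum 'I_n]).
have uds : uniq ds := undup_uniq _.
have ein : e \in ds by rewrite mem_undup mem_head.
have din : forall i, d i \in ds.
  by move=> i; rewrite mem_undup in_cons map_f ?orbT ?mem_enum.
pose g := fun j : 'I_(size ds) => nth e ds j.
pose f := fun j : 'I_(size ds) =>
  \sum_(i | d i == g j) h i - (if g j == e then c else 0).
have ginj : injective g.
  move=> j k /eqP; rewrite /g nth_uniq // => /eqP; apply: val_inj.
have fRs : forall j, Rs (g j) (f j).
  move=> j; apply: (sub (g j)).2.
    by apply: subgroup_sum => // i /eqP <-.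
  case: eqP => [->|_] //; exact (sub _).1.
have key : forall F : CT S -> R, \sum_(j < size ds) F (g j) = \sum_(s <- ds) F s.
  by move=> F; rewrite (big_nth e) big_mkord.
have fsum : \sum_j f j = 0.
  rewrite sumrB (key (fun s => \sum_(i | d i == s) h i))
     (key (fun s => if s == e then c else 0)).
  under eq_bigr do rewrite big_mkcond.
  rewrite exchange_big /=.
  under eq_bigr do rewrite -big_mkcond sum_pred1_seq //.
  rewrite -big_mkcond /= (eq_bigl (fun s => e == s)); last by move=> s; rewrite eq_sym.
  by rewrite sum_pred1_seq // hc subrr.
have j0lt : (index e ds < size ds)%N by rewrite index_mem.
have := uniq0 _ g f ginj fRs fsum (Ordinal j0lt).
by rewrite /f /g /= nth_index // eqxx => /eqP; rewrite subr_eq0 => /eqP.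
Qed.

Theorem lemma4p3 (R : zmodType) (mul : R -> R -> R) (S : Type)
    (op : S -> S -> option S) (Rs : S -> R -> Prop) :
  graded_ring_inducing mul op Rs ->
  cancellative op ->
  graded_vnr mul Rs ->
  forall e : S, op e e = Some e -> vnr_subring mul (Rs e).
Proof.
move=> [[assoc distl distr] dsd mulS mul0 _] [canR canL] vnr e ee x xe.
have [y xyx] := vnr e x xe.
have [sub [dec _]] := dsd.
have [n [g [f [_ [yf ysum]]]]] := dec y.
have mulx0 : forall a, mul a 0 = 0.
  move=> a; have h := distl a 0 0; rewrite addr0 in h.
  by apply: (addrI (mul a 0)); rewrite -h addr0.
have mul0x : forall a, mul 0 a = 0.
  move=> a; have h := distr 0 0 a; rewrite addr0 in h.
  by apply: (addrI (mul 0 a)); rewrite -h addr0.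
have sumL : forall a (I : Type) (r : seq I) (P : pred I) (F : I -> R),
    mul a (\sum_(i <- r | P i) F i) = \sum_(i <- r | P i) mul a (F i).
  by move=> a I r P F; apply: (big_morph (fun z => mul a z) (distl a) (mulx0 a)).
have sumR : forall b (I : Type) (r : seq I) (P : pred I) (F : I -> R),
    mul (\sum_(i <- r | P i) F i) b = \sum_(i <- r | P i) mul (F i) b.
  by move=> b I r P F; apply: (big_morph (fun z => mul z b) (fun u v => distr u v b) (mul0x b)).
have W : forall i, {w : CT S | Rs w (mul (mul x (f i)) x) /\ (w == e :> CT S) = ((g i : CT S) == e)}.
  move=> i; apply: constructive_indefinite_description.
  have zero : mul (mul x (f i)) x = 0 -> exists w : CT S,
      Rs w (mul (mul x (f i)) x) /\ (w == e :> CT S) = ((g i : CT S) == e).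
    move=> ->; exists (g i); split; last by [].
    exact: (sub _).1.
  case: (classic (g i = e)) => [gie|gine].
    exists e; split; last by rewrite eqxx; apply/esym/eqP.
    by apply: (mulS e e e) => //; apply: (mulS e e e) => //; rewrite -gie.
  case ou: (op e (g i)) => [u|]; last first.
    apply: zero; case: (classic (mul x (f i) = 0)) => [->|nz]; first by rewrite mul0x.
    by have := mul0 _ _ _ _ xe (yf i) nz; rewrite ou.
  have xfu := mulS _ _ _ _ _ ou xe (yf i).
  case ow: (op u e) => [w|]; last first.
    apply: zero; case: (classic (mul (mul x (f i)) x = 0)) => [//|nz].
    by have := mul0 _ _ _ _ xfu xe nz; rewrite ow.
  exists w; split; first exact: (mulS _ _ _ _ _ ow xfu xe).
  have -> : ((g i : CT S) == e) = false by apply/eqP.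
  apply/eqP => we; apply: gine; subst w.
  have ue : u = e by apply: (canR u e e e).
  subst u; exact: (canL (g i) e e e).
pose wf := fun i => sval (W i).
have key := @homog_comp R S Rs (e : CT S) n wf (fun i => mul (mul x (f i)) x) x dsd xe
  (fun i => (svalP (W i)).1).
exists (\sum_(i | (g i : CT S) == e) f i); split.
  by apply: subgroup_sum => // i /eqP <-.
rewrite sumL sumR -{1}key.
- by apply: eq_bigl => i; rewrite (svalP (W i)).2.
- by rewrite [RHS]xyx ysum sumL sumR.
Qed.
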